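(* Let $n\ge 1$ and let $f:\{0,1\}^n\to\{0,1\}^n$. If $G_f$ is topologically transitive on $(\mathcal{X},d)$, then $G_f$ is regular, i.e. the set of periodic points of $G_f$ is dense in $(\mathcal{X},d)$. In other words, $\mathcal{T}\subset\mathcal{R}$, where $\mathcal{T}$ is the set of maps $f:\{0,1\}^n\to\{0,1\}^n$ with $G_f$ transitive and $\mathcal{R}$ the set of such maps with $G_f$ regular.
   Context: Write $\mathbb{B}=\{0,1\}$ and $\llbracket 1;n\rrbracket=\{1,\dots,n\}$. For $f=(f_1,\dots,f_n):\mathbb{B}^n\to\mathbb{B}^n$, define $F_f(i,x)=(x_1,\dots,x_{i-1},f_i(x),x_{i+1},\dots,x_n)$ for $i\in\llbracket 1;n\rrbracket$, $x\in\mathbb{B}^n$. Let $\mathcal{X}=\llbracket 1;n\rrbracket^{\mathbb{N}}\times\mathbb{B}^n$ and $G_f(s,x)=(\sigma(s),F_f(s_0,x))$ where $\sigma(s)_t=s_{t+1}$. The metric is $d((s,x),(s',x'))=\sum_{i=1}^n|x_i-x'_i|+\frac{9}{n}\sum_{t\in\mathbb{N}}\frac{|s_t-s'_t|}{10^{t+1}}$. $G_f$ is topologically transitive if for all $X,Y\in\mathcal{X}$ and all open balls $B_X,B_Y$ centered at $X,Y$, there exist $X'\in B_X$ and $t\in\mathbb{N}$ with $G_f^t(X')\in B_Y$. A point $X$ is periodic if $G_f^p(X)=X$ for some $p\ge 1$. *)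

(* Defs.v *)
From Stdlib Require Import Reals.
From Coquelicot Require Import Coquelicot.
From mathcomp Require Import all_boot.

Set Implicit Arguments.
Unset Strict Implicit.
Unset Printing Implicit Defensive.

(* Indices [1;n] are represented by 'I_n = {0,...,n-1} (shift by one; this
   does not change |s_t - s'_t| in the metric). *)

Definition Bn (n : nat) := {ffun 'I_n -> bool}.

Definition Xspace (n : nat) : Type := ((nat -> 'I_n) * Bn n)%type.

Definition F_f (n : nat) (f : Bn n -> Bn n) (i : 'I_n) (x : Bn n) : Bn n :=
  [ffun j => if j == i then f x j else x j].

Definition G_f (n : nat) (f : Bn n -> Bn n) (X : Xspace n) : Xspace n :=
  (fun t => X.1 t.+1, F_f f (X.1 0%N) X.2).

Definition b2R (b : bool) : R := if b then R1 else R0.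

Definition dist_X (n : nat) (X Y : Xspace n) : R :=
  Rplus
    (\big[Rplus/R0]_(i < n) Rabs (Rminus (b2R (X.2 i)) (b2R (Y.2 i))))
    (Rmult (Rdiv (IZR 9) (INR n))
       (Series (fun t => Rdiv (Rabs (Rminus (INR (nat_of_ord (X.1 t)))
                                           (INR (nat_of_ord (Y.1 t)))))
                              (pow (IZR 10) t.+1)))).

Definition topologically_transitive (n : nat) (g : Xspace n -> Xspace n) : Prop :=
  forall (X Y : Xspace n) (rX rY : R), Rlt R0 rX -> Rlt R0 rY ->
    exists X' : Xspace n, Rlt (dist_X X X') rX /\
      exists t : nat, Rlt (dist_X Y (iter t g X')) rY.

Definition periodic_point (n : nat) (g : Xspace n -> Xspace n) (X : Xspace n) : Prop :=
  exists p : nat, (1 <= p)%N /\ iter p g X = X.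

Definition regular (n : nat) (g : Xspace n -> Xspace n) : Prop :=
  forall (X : Xspace n) (r : R), Rlt R0 r ->
    exists X' : Xspace n, periodic_point g X' /\ Rlt (dist_X X X') r.

(* Main.v *)
Require Import Defs.
From Stdlib Require Import Reals.
From mathcomp Require Import all_boot.
From HB Require Import structures.
From Stdlib Require Import Lra Lia Classical FunctionalExtensionality.
From Coquelicot Require Import Coquelicot.

Section RSer.
Local Open Scope R_scope.
Lemma geomS : Series (fun t => (/10)^t) = 10/9.
Proof.
apply: is_series_unique. have -> : 10/9 = /(1 - /10) by field.
apply: is_series_geom. rewrite Rabs_pos_eq; lra.
Qed.

Lemma ser_ex (a : nat -> R) (c : R) :
  (forall t, 0 <= a t <= c * (/10)^t) -> ex_series a.
Proof.
move=> H. apply: (@ex_series_le _ _ a (fun t => c * (/10)^t)).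
  move=> t; rewrite /norm /= /abs /=. rewrite Rabs_pos_eq; apply H.
apply: ex_series_scal_l. apply: ex_series_geom. rewrite Rabs_pos_eq; lra.
Qed.

Lemma ser_ge0 (a : nat -> R) (c : R) :
  (forall t, 0 <= a t <= c * (/10)^t) -> 0 <= Series a.
Proof.
move=> H. have -> : 0 = Series (fun t => 0 * a t).
  by rewrite Series_scal_l Rmult_0_l.
apply: (Series_le (fun t => 0 * a t) a); last by exact: (@ser_ex a c H).
move=> t; have := H t; lra.
Qed.

Lemma ser_tail (a : nat -> R) (c : R) (k : nat) :
  (forall t, 0 <= a t <= c * (/10)^t) -> (forall t, (t < k)%nat -> a t = 0) ->
  Series a <= c * (/10)^k * (10/9).
Proof.
move=> H Hk. rewrite (@Series_incr_n_aux a k (fun t ht => Hk t (introT ltP ht))) -geomS -Series_scal_l.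
apply: Series_le.
  move=> t; have := H (k+t)%coq_nat; rewrite pow_add; lra.
apply: ex_series_scal_l. apply: ex_series_geom. rewrite Rabs_pos_eq; lra.
Qed.

HB.instance Definition _ := Monoid.isComLaw.Build R 0 Rplus (fun a b c => esym (Rplus_assoc a b c)) Rplus_comm Rplus_0_l.

Lemma term_bd (n : nat) (u v : 'I_n) (t : nat) :
  0 <= Rabs (INR u - INR v) / 10 ^ t.+1 <= INR n / 10 * (/10)^t.
Proof.
have hu : INR u < INR n by apply: lt_INR; apply/ltP.
have hv : INR v < INR n by apply: lt_INR; apply/ltP.
have h0u := pos_INR u. have h0v := pos_INR v.
have hp : 0 < 10 ^ t.+1 by apply: pow_lt; lra.
have ha : Rabs (INR u - INR v) <= INR n by apply: Rabs_le; lra.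
have -> : INR n / 10 * (/10)^t = INR n / 10 ^ t.+1.
  rewrite pow_inv /= ; field. all: try (apply: pow_nonzero; lra).
split.
  apply: Rmult_le_pos; [apply: Rabs_pos| left; apply: Rinv_0_lt_compat; lra].
apply: Rmult_le_compat_r => //; left; apply: Rinv_0_lt_compat; lra.
Qed.

Lemma b2R_diff (a b : bool) : 0 <= Rabs (b2R a - b2R b) /\ (a <> b -> Rabs (b2R a - b2R b) = 1).
Proof.
split; first exact: Rabs_pos.
case: a; case: b => //= _; [have -> : R1 - R0 = 1 by lra | have -> : R0 - R1 = -1 by lra]; [rewrite Rabs_pos_eq; lra | rewrite Rabs_left; lra].
Qed.

Lemma sum_ge (n : nat) (F : 'I_n -> R) i : (forall j, 0 <= F j) -> F i <= \big[Rplus/R0]_(j<n) F j.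
Proof.
move=> H; rewrite (bigD1 i) //=; rewrite -{1}[F i]Rplus_0_r; apply: Rplus_le_compat_l.
apply: big_ind => //; [lra | move=> a b; lra].
Qed.

Lemma dist_state (n : nat) (X Y : Xspace n) : dist_X X Y < 1 -> X.2 = Y.2.
Proof.
rewrite /dist_X => H.
case: (eqVneq X.2 Y.2) => // /eqP neq; exfalso.
have [i hi] : exists i, X.2 i <> Y.2 i.
  apply: not_all_ex_not => h; apply: neq; apply/ffunP => j; exact: h.
have hs : 0 <= 9 / INR n * Series (fun t => Rabs (INR (X.1 t) - INR (Y.1 t)) / 10 ^ t.+1).
  case: n X Y neq i hi H => [|n] X Y neq i; first by case: i.
  move=> _ _; apply: Rmult_le_pos.
    apply: Rmult_le_pos; first lra. left; apply: Rinv_0_lt_compat; apply: lt_0_INR; lia.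
  apply: (@ser_ge0 _ (INR n.+1 / 10)) => t; exact: term_bd.
have h1 := (b2R_diff (X.2 i) (Y.2 i)).2 hi.
have h2 := @sum_ge n (fun j => Rabs (b2R (X.2 j) - b2R (Y.2 j))) i (fun j => Rabs_pos _).
lra.
Qed.

End RSer.

Section Dyn.
Variables (n : nat) (f : Bn n -> Bn n).

Fixpoint run (s : nat -> 'I_n) (x : Bn n) (t : nat) : Bn n :=
  match t with 0 => x | t'.+1 => run (fun j => s j.+1) (F_f f (s 0%N) x) t' end.

Lemma iterG t : forall s x, iter t (G_f f) (s, x) = (fun j => s (t + j)%N, run s x t).
Proof.
elim: t => [|t IH] s x.
  by rewrite /=; congr pair; apply: functional_extensionality.
rewrite iterSr /G_f /= IH; congr pair; try (apply: functional_extensionality => j; by rewrite addSnnS).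
Qed.

Lemma run_ext t : forall s s' x, (forall j, (j < t)%N -> s j = s' j) -> run s x t = run s' x t.
Proof.
elim: t => [|t IH] s s' x H //=.
rewrite H //; apply: IH => j hj; exact: H.
Qed.

Lemma run_add a : forall b s x, run s x (a + b) = run (fun j => s (a + j)%N) (run s x a) b.
Proof.
elim: a => [|a IH] b s x //=.
all: rewrite IH; congr run; try (apply: functional_extensionality => j; by rewrite addSnnS).
Qed.
End Dyn.

Lemma dist_same (n : nat) (s s' : nat -> 'I_n) (x : Bn n) (k : nat) :
  (0 < n)%N -> (forall j, (j < k)%N -> s j = s' j) ->
  (dist_X (s, x) (s', x) <= (/10)^k)%R.
Proof.
move=> hn hk; rewrite /dist_X; cbn [fst snd].
rewrite big1; last by move=> i _; rewrite Rminus_diag Rabs_R0.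
have hn' : (0 < INR n)%R by apply: lt_0_INR; apply/ltP.
have := @ser_tail (fun t => Rabs (INR (s t) - INR (s' t)) / 10 ^ t.+1) (INR n / 10) k
  (fun t => term_bd n (s t) (s' t) t).
move/(_ (fun t ht => ltac:(rewrite /= hk // Rminus_diag Rabs_R0; lra))) => h.
have h9 : (0 <= 9 / INR n)%R by apply: Rmult_le_pos; [lra| left; apply: Rinv_0_lt_compat].
have := Rmult_le_compat_l _ _ _ h9 h.
have -> : (9 / INR n * (INR n / 10 * (/ 10) ^ k * (10 / 9)) = (/10)^k)%R by field; lra.
lra.
Qed.

Theorem proposition2 (n : nat) (f : Bn n -> Bn n) :
  (1 <= n)%N ->
  topologically_transitive (G_f f) -> regular (G_f f).
Proof.
move=> hn HT [s x] r hr.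
have [N HN] := @pow_lt_1_zero (/10) ltac:(rewrite Rabs_pos_eq; lra) r hr.
set k := N.+1.
have hk : ((/10)^k < r)%R.
  have := HN k (le_S _ _ (le_n N)); rewrite Rabs_pos_eq //; apply: pow_le; lra.
set y := @run n f s x k.
have [[m y'] [h1 [t h2]]] := HT (s, y) (s, x) R1 R1 Rlt_0_1 Rlt_0_1.
have ey : y = y' := @dist_state _ _ _ h1.
rewrite iterG in h2. have ex : x = @run n f m y' t := @dist_state _ _ _ h2.
set p := (k + t)%N.
have hp : (0 < p)%N by rewrite /p /k.
set s' := fun j => let q := (j %% p)%N in if (q < k)%N then s q else m (q - k)%N.
exists (s', x); split.
  exists p; split => //.
  rewrite iterG; congr pair.
    apply: functional_extensionality => j; by rewrite /s' modnDl.
  rewrite /p run_add.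
  have -> : @run n f s' x k = y.
    apply: run_ext => j hj. rewrite /s' /= modn_small ?hj //.
    by apply: leq_trans hj _; rewrite /p leq_addr.
  rewrite ey ex; apply: run_ext => j hj.
  rewrite /s' /= modn_small; last by rewrite /p ltn_add2l.
  by rewrite ltnNge leq_addr /= addKn.
apply: Rle_lt_trans hk.
apply: dist_same => // j hj.
rewrite /s' /= modn_small ?hj //.
by apply: leq_trans hj _; rewrite /p leq_addr.
Qed.
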